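(* Let $\theta\in\mathbb{R}^d$ parameterize a differentiable model with success probability $P_\theta\in(0,1]$ and score $s(\theta)\triangleq\nabla_\theta\log P_\theta$. Fix $q\in[0,1]$, a target $\delta\in(0,1/2]$ and a constant $C>0$. For $p_0\in(0,\delta)$, let $\theta(t)$ be a solution of the gradient flow $\dot\theta=-\nabla_\theta\ell_q(\theta)$ with $P_{\theta(0)}=p_0$, and suppose $\|s(\theta(t))\|\le C$ for all $t\ge0$. Let $T_q(p_0,\delta)\triangleq\inf\{t\ge0: P_{\theta(t)}\ge\delta\}$. Then $$T_q(p_0,\delta)\ \ge\ \frac{1}{C^2}\int_{p_0}^{\delta}u^{-(2-q)}\,du,$$ and consequently, as $p_0\to0$ (with $q,\delta,C$ fixed), $T_q(p_0,\delta)=\Omega\!\left(\frac{p_0^{-(1-q)}}{1-q}\right)$ for $q\in[0,1)$ and $T_1(p_0,\delta)=\Omega\!\left(\log\frac1{p_0}\right)$.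
   Context: The Tsallis $q$-logarithm is $\log_q(u)=\frac{u^{1-q}-1}{1-q}$ ($q<1$), $\log_1(u)=\log u$, and $\ell_q(\theta)\triangleq-\log_q P_\theta$. *)

(* Defs.v *)
From HB Require Import structures.
From mathcomp Require Import all_boot all_order all_algebra.
From mathcomp Require Import all_classical all_reals all_analysis.
Set Implicit Arguments. Unset Strict Implicit. Unset Printing Implicit Defensive.
Import Order.TTheory GRing.Theory Num.Theory.
Import numFieldNormedType.Exports.
Local Open Scope classical_set_scope.
Local Open Scope ring_scope.

Section Defs.
Variables (R : realType) (d : nat).

Definition ebasis (i : 'I_d) : 'rV[R]_d := delta_mx 0 i.

Definition grad (f : 'rV[R]_d -> R) (x : 'rV[R]_d) : 'rV[R]_d :=
  \row_i ('D_(ebasis i) f x).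

Definition enorm (v : 'rV[R]_d) : R := Num.sqrt (\sum_i v 0 i ^+ 2).

Definition logq (q u : R) : R :=
  if q == 1 then ln u else (u `^ (1 - q) - 1) / (1 - q).

Definition ellq (P : 'rV[R]_d -> R) (q : R) (x : 'rV[R]_d) : R :=
  - logq q (P x).

Definition score (P : 'rV[R]_d -> R) (x : 'rV[R]_d) : 'rV[R]_d :=
  grad (fun y => ln (P y)) x.

Definition admissible_flow (P : 'rV[R]_d -> R) (q C p0 : R)
    (theta : R -> 'rV[R]_d) : Prop :=
  {within `[0, +oo[, continuous theta} /\
  (forall t : R, 0 < t -> is_derive t 1 theta (- grad (ellq P q) (theta t))) /\
  P (theta 0) = p0 /\
  (forall t : R, 0 <= t -> enorm (score P (theta t)) <= C).

(* hitting time T_q(p0, delta) = inf { t >= 0 : P_{theta(t)} >= delta }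
   (in the extended reals; +oo if never reached) *)
Definition hitting_time (P : 'rV[R]_d -> R) (delta : R)
    (theta : R -> 'rV[R]_d) : \bar R :=
  ereal_inf [set t%:E | t in [set t : R | 0 <= t /\ delta <= P (theta t)]].

End Defs.

(* Main.v *)
Require Import Defs.

From HB Require Import structures.
From mathcomp Require Import all_boot all_order all_algebra.
From mathcomp Require Import all_classical all_reals all_analysis.
From mathcomp Require Import ring lra.
Import Order.TTheory GRing.Theory Num.Theory.
Import numFieldNormedType.Exports.
Local Open Scope classical_set_scope.
Local Open Scope ring_scope.

Section H.
Variables (R : realType) (d : nat).

Lemma diff_grad (g : 'rV[R]_d -> R) x v : differentiable g x ->
  'd g x v = \sum_i v 0 i * grad g x 0 i.
Proof.
move=> dg; rewrite {1}(row_sum_delta v) linear_sum; apply: eq_bigr => i _.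
by rewrite linearZ /= mxE deriveE.
Qed.

Lemma D_comp (f : 'rV[R]_d -> R) (phi : R -> R) x v :
  differentiable f x -> derivable phi (f x) 1 ->
  'D_v (phi \o f) x = 'D_1 phi (f x) * 'D_v f x.
Proof.
move=> df /derivable1_diffP dphi.
rewrite deriveE; last exact: differentiable_comp.
rewrite diff_comp //= [in RHS]deriveE // [in RHS]deriveE // diff1E //.
by rewrite [_ *: _]mulrC [1 *: _]mul1r.
Qed.

Lemma path_derive (g : 'rV[R]_d -> R) (th : R -> 'rV[R]_d) t w :
  differentiable g (th t) -> is_derive t 1 th w ->
  is_derive t 1 (g \o th) (\sum_i w 0 i * grad g (th t) 0 i).
Proof.
move=> dg [dth <-].
have dth' : differentiable th t by apply/derivable1_diffP.
have dc : differentiable (g \o th) t by exact: differentiable_comp.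
apply: DeriveDef; first exact/derivable1_diffP.
rewrite deriveE // diff_comp //= -diff_grad //.
by rewrite deriveE.
Qed.

Lemma is_derive_ext (f g : R -> R) (x df : R) : f = g -> is_derive x 1 f df -> is_derive x 1 g df.
Proof. by move=> ->. Qed.

Lemma is_derive_scal (a L : R) : is_derive L 1 (fun x : R => a * x) a.
Proof.
have H := is_deriveM (is_derive_cst a L 1) (is_derive_id L (1:R)).
apply: is_derive_eq.
by rewrite scaler0 addr0 /= [_%:A]mulr1.
Qed.

Lemma is_derive_expRM (a L : R) :
  is_derive L 1 (fun x : R => expR (a * x)) (a * expR (a * L)).
Proof.
have := @is_derive1_comp R expR (fun x => a * x) L _ _ (is_derive_expR (a * L)) (is_derive_scal a L).
by rewrite mulrC.
Qed.

Lemma is_derive_affexp (a c b L : R) :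
  is_derive L 1 (fun x : R => c * expR (a * x) + b) (c * (a * expR (a * L))).
Proof.
have := is_deriveD (is_deriveM (is_derive_cst c L 1) (is_derive_expRM a L)) (is_derive_cst b L 1).
move=> H; apply: is_derive_ext; last first.
  rewrite (_ : c * _ = cst c L *: (a * expR (a * L)) + expR (a * L) *: 0 + 0); first exact: H.
  by rewrite scaler0 !addr0.
by apply/funext.
Qed.

Lemma phi_deriv (q L : R) :
  is_derive L 1 (fun x : R => - logq q (expR x)) (- expR ((1 - q) * L)).
Proof.
rewrite /logq; have [->|q1] := eqVneq q 1.
  rewrite subrr mul0r expR0.
  have H := is_derive_scal (-1) L; apply: is_derive_ext H.
  by apply/funext => x; rewrite expRK mulN1r.
have k0 : 1 - q != 0 by rewrite subr_eq0 eq_sym.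
rewrite (_ : - expR _ = - (1 - q)^-1 * ((1 - q) * expR ((1 - q) * L))); last first.
  by rewrite mulNr mulrA mulVf // mul1r.
have H := is_derive_affexp (1 - q) (- (1 - q)^-1) ((1 - q)^-1) L; apply: is_derive_ext H.
apply/funext => x; rewrite -expRM [x * (1 - q)]mulrC.
ring.
Qed.

Definition psi (q : R) : R -> R :=
  if q == 1 then id else fun x => (q - 1)^-1 * expR ((q - 1) * x) + - (q - 1)^-1.

Lemma psi_deriv (q L : R) : is_derive L 1 (psi q) (expR ((q - 1) * L)).
Proof.
rewrite /psi; have [->|q1] := eqVneq q 1.
  by rewrite subrr mul0r expR0; exact: is_derive_id.
have k0 : q - 1 != 0 by rewrite subr_eq0.
have := is_derive_affexp (q - 1) ((q - 1)^-1) (- (q - 1)^-1) L.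
by rewrite mulrA mulVf // mul1r.
Qed.

Section Model.
Variables (P : 'rV[R]_d -> R) (q C : R).
Hypothesis dP : forall x, differentiable P x.
Hypothesis Ppos : forall x, 0 < P x.

Lemma dg x : differentiable (fun y => ln (P y)) x.
Proof.
change (differentiable (@ln R \o P) x); apply: differentiable_comp; first exact: dP.
apply/derivable1_diffP; have H := is_derive1_ln (Ppos x); exact: ex_derive.
Qed.

Lemma ellq_comp : ellq P q = (fun L => - logq q (expR L)) \o (fun y => ln (P y)).
Proof. by apply/funext => y; rewrite /ellq /= lnK // posrE. Qed.

Lemma grad_ellq y i :
  grad (ellq P q) y 0 i = - expR ((1 - q) * ln (P y)) * score P y 0 i.
Proof.
rewrite ellq_comp /grad /score !mxE D_comp //; last first.
  have H := phi_deriv q (ln (P y)); exact: ex_derive.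
  exact: dg.
by have [_ ->] := phi_deriv q (ln (P y)).
Qed.

Lemma flow_deriv (theta : R -> 'rV[R]_d) (t : R) :
  is_derive t 1 theta (- grad (ellq P q) (theta t)) ->
  is_derive t 1 (psi q \o ((fun y => ln (P y)) \o theta))
    (\sum_i score P (theta t) 0 i ^+ 2).
Proof.
move=> Hth.
have H1 := path_derive _ _ _ _ (dg (theta t)) Hth.
have H2 := is_derive1_comp (psi_deriv q _) H1.
apply: is_derive_eq H2 _.
rewrite mulr_sumr; apply: eq_bigr => i _.
have -> : (- grad (ellq P q) (theta t)) 0 i =
   expR ((1 - q) * ln (P (theta t))) * score P (theta t) 0 i.
  by rewrite mxE grad_ellq mulNr opprK.
rewrite -/(score P (theta t)) mulrA mulrA -expRD -mulrDl.
have -> : q - 1 + (1 - q) = 0 by ring.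
by rewrite mul0r expR0 mul1r expr2.
Qed.

Lemma sum_le_C x : enorm (score P x) <= C -> \sum_i score P x 0 i ^+ 2 <= C ^+ 2.
Proof.
rewrite /enorm => h.
have S0 : 0 <= \sum_i score P x 0 i ^+ 2 by apply: sumr_ge0 => i _; exact: sqr_ge0.
rewrite -(sqr_sqrtr S0).
have h0 := sqrtr_ge0 (\sum_i score P x 0 i ^+ 2).
move: h h0; set s := Num.sqrt _ => h h0.
nra.
Qed.

Lemma flow_bound (theta : R -> 'rV[R]_d) p0 :
  admissible_flow P q C p0 theta -> forall t, 0 < t ->
  psi q (ln (P (theta t))) - psi q (ln p0) <= C ^+ 2 * t.
Proof.
case=> cth [dth [th0 bnd]] t t0.
have cG : continuous (psi q \o (fun y => ln (P y))).
  move=> y; apply: continuous_comp; first exact: differentiable_continuous (dg y).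
  apply: differentiable_continuous; apply/derivable1_diffP.
  have H := psi_deriv q (ln (P y)); exact: ex_derive.
have cth' : {within `[0, t], continuous theta}.
  apply: continuous_subspaceW cth => x /=; rewrite !in_itv /= => /andP[-> _].
  by [].
have cF : {within `[0, t], continuous (psi q \o ((fun y => ln (P y)) \o theta))}.
  move=> x; exact: (continuous_comp (cth' x) (cG _)).
have dF : forall x, x \in `]0, t[ -> is_derive x 1 (psi q \o ((fun y => ln (P y)) \o theta))
    (\sum_i score P (theta x) 0 i ^+ 2).
  by move=> x hx; apply: flow_deriv; apply: dth; rewrite (itvP hx).
have [c c0t E] := MVT t0 dF cF.
move: E => /=; rewrite th0 => ->; rewrite subr0.
apply: ler_wpM2r; first exact: ltW.
apply: sum_le_C; apply: bnd; by rewrite (itvP c0t).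
Qed.
End Model.

Lemma psi_mono (q a b : R) : a <= b -> psi q a <= psi q b.
Proof.
move=> ab.
have dpsi : forall x, x \in `]a, b[ -> is_derive x 1 (psi q) (expR ((q - 1) * x)).
  by move=> x _; exact: psi_deriv.
have cpsi : {within `[a, b], continuous (psi q)}.
  apply: continuous_subspaceT => x; apply: differentiable_continuous.
  apply/derivable1_diffP; have H := psi_deriv q x; exact: ex_derive.
have [c _ E] := MVT_segment ab dpsi cpsi.
rewrite -subr_ge0 E; apply: mulr_ge0; first exact: expR_ge0.
by rewrite subr_ge0.
Qed.

Lemma F_deriv (q x : R) : 0 < x -> is_derive x 1 (psi q \o @ln R) (x `^ (q - 2)).
Proof.
move=> x0.
have H := is_derive1_comp (psi_deriv q (ln x)) (is_derive1_ln x0).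
apply: is_derive_eq H _.
have -> : x^-1 = expR (- ln x) by rewrite expRN lnK ?posrE.
rewrite /powR gt_eqF // -expRD.
by congr expR; ring.
Qed.

Lemma F_cont (q x : R) : 0 < x -> {for x, continuous (psi q \o @ln R)}.
Proof.
move=> x0; apply: differentiable_continuous; apply/derivable1_diffP.
have H := F_deriv q x x0; exact: ex_derive.
Qed.

Lemma int_eq (q p0 delta : R) : 0 < p0 < delta ->
  (\int[lebesgue_measure]_(u in `[p0, delta]) (u `^ (q - 2))%:E =
   (psi q (ln delta) - psi q (ln p0))%:E)%E.
Proof.
case/andP=> p00 p0d.
rewrite (@continuous_FTC2 R (fun u => u `^ (q - 2)) (psi q \o @ln R) p0 delta p0d) //.
- apply: continuous_in_subspaceT => x /[!inE] xI.
  have x0 : 0 < x by apply: lt_le_trans p00 _; rewrite (itvP xI).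
  apply: differentiable_continuous; apply/derivable1_diffP.
  have H := is_derive1_powR (q - 2) x0; exact: ex_derive.
- split.
  + move=> x xI; have x0 : 0 < x by apply: lt_trans p00 _; rewrite (itvP xI).
    have H := F_deriv q x x0; exact: ex_derive.
  + by apply: cvg_at_right_filter; exact: F_cont.
  + by apply: cvg_at_left_filter; apply: F_cont; exact: lt_trans p0d.
- move=> x xI; have x0 : 0 < x by apply: lt_trans p00 _; rewrite (itvP xI).
  by rewrite derive1E; have [_ ->] := F_deriv q x x0.
Qed.
End H.

Theorem mainTheorem7 (R : realType) (d : nat) (P : 'rV[R]_d -> R)
  (q delta C : R) :
  (forall x, differentiable P x) ->
  (forall x, 0 < P x <= 1) ->
  0 <= q <= 1 ->
  0 < delta <= 2^-1 ->
  0 < C ->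
  (* integral lower bound *)
  (forall (p0 : R) (theta : R -> 'rV[R]_d),
     0 < p0 < delta ->
     admissible_flow P q C p0 theta ->
     ((C ^- 2)%:E * \int[lebesgue_measure]_(u in `[p0, delta]) (u `^ (q - 2))%:E
       <= hitting_time P delta theta)%E)
  /\
  (* asymptotics as p0 -> 0 *)
  (exists c : R, 0 < c /\ exists eps : R, 0 < eps /\
     forall (p0 : R) (theta : R -> 'rV[R]_d),
       0 < p0 < eps -> p0 < delta ->
       admissible_flow P q C p0 theta ->
       ((c * (if q < 1 then p0 `^ (q - 1) / (1 - q) else ln (p0^-1)))%:E
         <= hitting_time P delta theta)%E).
Proof.
move=> dP Pb /andP[q0 q1] /andP[d0 d2] C0.
have Ppos : forall x, 0 < P x by move=> x; case/andP: (Pb x).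
have lower : forall (theta : R -> 'rV[R]_d) K,
    (forall t, 0 <= t -> delta <= P (theta t) -> K <= t) ->
    ((K%:E) <= hitting_time P delta theta)%E.
  move=> theta K H; apply: le_ereal_inf_tmp => _ [t [t0 dt] <-].
  rewrite lee_fin; exact: H.
have key : forall p0 (theta : R -> 'rV[R]_d), 0 < p0 < delta ->
    admissible_flow P q C p0 theta -> forall t, 0 <= t -> delta <= P (theta t) ->
    psi R q (ln delta) - psi R q (ln p0) <= C ^+ 2 * t.
  move=> p0 theta /andP[p00 p0d] adm t t0 dt.
  have tpos : 0 < t.
    rewrite lt_neqAle t0 andbT; apply/eqP => t0E.
    case: adm => _ [_ [th0 _]]; move: dt; rewrite -t0E th0 => dt.
    by move: (lt_le_trans p0d dt); rewrite ltxx.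
  apply: le_trans (@flow_bound R d P q C dP Ppos theta p0 adm t tpos).
  rewrite lerD2r; apply: psi_mono; rewrite ler_ln ?posrE //; exact: Ppos.
have fin : forall Y D t, Y <= D -> D <= C ^+ 2 * t -> C ^- 2 * Y <= t.
  move=> Y D t YD Dt; rewrite ler_pdivrMl ?exprn_gt0 //.
  exact: le_trans YD Dt.
split.
  move=> p0 theta hp adm; rewrite int_eq // -EFinM; apply: lower => t t0 dt.
  exact: fin (lexx _) (key _ _ hp adm t t0 dt).
exists (C ^- 2 / 2); split; first by rewrite divr_gt0 // invr_gt0 exprn_gt0.
case: (eqVneq q 1) => [qE|qn1].
  subst q; exists (expR (2 * ln delta)); split; first exact: expR_gt0.
  move=> p0 theta /andP[p00 p0e] p0d adm; rewrite ltxx /=.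
  apply: lower => t t0 dt.
  have K := key p0 theta (introT andP (conj p00 p0d)) adm t t0 dt.
  rewrite /psi eqxx /= in K.
  rewrite -mulrA; apply: fin _ K.
  rewrite lnV ?posrE //.
  have h : ln p0 < 2 * ln delta by rewrite -ltr_expR lnK ?posrE.
  lra.
have qlt : q < 1 by rewrite lt_neqAle qn1.
have k0 : 0 < 1 - q by rewrite subr_gt0.
exists (expR (ln delta - ln 2 / (1 - q))); split; first exact: expR_gt0.
move=> p0 theta /andP[p00 p0e] p0d adm; rewrite qlt.
apply: lower => t t0 dt.
have K := key p0 theta (introT andP (conj p00 p0d)) adm t t0 dt.
rewrite /psi (negbTE qn1) in K.
rewrite -mulrA; apply: fin _ K.
rewrite /powR gt_eqF //.
have h : ln p0 < ln delta - ln 2 / (1 - q) by rewrite -ltr_expR lnK ?posrE.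
have hAB : 2 * expR ((q - 1) * ln delta) <= expR ((q - 1) * ln p0).
  rewrite -[X in X * _](@lnK R 2) ?posrE // -expRD ler_expR.
  have h' : ln 2 < (1 - q) * (ln delta - ln p0).
    by rewrite -(ltr_pdivrMl _ _ k0) mulrC; lra.
  nra.
have -> : (q - 1)^-1 = - (1 - q)^-1 by rewrite -invrN opprB.
have kp : 0 < (1 - q)^-1 by rewrite invr_gt0.
move: hAB kp; set A := expR (_ * ln p0); set B := expR (_ * ln delta).
set k := (1 - q)^-1 => hAB kp.
nra.
Qed.
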